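(* Let $e$ be an edge of a graph $G$. Then $\operatorname{reg}(G/e)\le\operatorname{reg}(G)\le\operatorname{reg}(G/e)+1$. Consequently $\operatorname{reg}(H)\le\operatorname{reg}(G)$ whenever $H$ is obtained from $G$ by a sequence of edge contractions.
   Context: For an edge $e=xy$, $G/e$ is the simple graph obtained from $G-\{x,y\}$ by adding a new vertex $w$ adjacent to every vertex of $(N_G(x)\cup N_G(y))\setminus\{x,y\}$. $\operatorname{reg}(G)=\max\{j\ge0:\widetilde H_{j-1}(\operatorname{Ind}(G[S]);\Bbbk)\neq0\text{ for some }S\subseteq V(G)\}$ over a field $\Bbbk$, $\operatorname{Ind}$ the independence complex. *)

(* Defs.v *)
From HB Require Import structures.
From mathcomp Require Import all_boot all_order all_algebra.
From Stdlib Require Import ClassicalEpsilon.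
Set Implicit Arguments. Unset Strict Implicit. Unset Printing Implicit Defensive.
Import GRing.Theory.
Local Open Scope ring_scope.

Record sgraph := SGraph {
  vtx : finType;
  adj : rel vtx;
  adj_sym : symmetric adj;
  adj_irr : irreflexive adj }.

Section Contract.
Variables (G : sgraph) (x y : vtx G).

Definition cvtx_rest := {v : vtx G | (v != x) && (v != y)}.
(* None is the new vertex w; Some v are the vertices of G - {x,y}. *)
Definition cvtx : finType := option cvtx_rest.

Definition cadj (a b : cvtx) : bool :=
  match a, b with
  | None, None => false
  | None, Some v => adj x (val v) || adj y (val v)
  | Some u, None => adj x (val u) || adj y (val u)
  | Some u, Some v => adj (val u) (val v)
  end.

Lemma cadj_sym : symmetric cadj.
Proof. by case=> [u|] [v|] //=; rewrite adj_sym. Qed.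

Lemma cadj_irr : irreflexive cadj.
Proof. by case=> [u|] //=; rewrite adj_irr. Qed.

Definition contract : sgraph := SGraph cadj_sym cadj_irr.
End Contract.

Inductive contracts_to : sgraph -> sgraph -> Prop :=
  | ct_refl G : contracts_to G G
  | ct_step (G H : sgraph) (x y : vtx G) :
      adj x y -> contracts_to (contract x y) H -> contracts_to G H.

Section Homology.
Variables (F : fieldType) (V : finType).

Definition bsign (v : V) (sigma : {set V}) : F :=
  (-1) ^+ #|[set u in sigma | (enum_rank u < enum_rank v)%N]|.

(* chains are functions {set V} -> F (a set of size d = an (d-1)-simplex) *)
Definition bd (c : {set V} -> F) : {set V} -> F :=
  fun tau => \sum_(v | v \notin tau) bsign v (v |: tau) * c (v |: tau).

Definition chain_on (K : {set {set V}}) (d : nat) (c : {set V} -> F) : Prop :=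
  forall sigma, c sigma != 0 -> sigma \in K /\ #|sigma| = d.

(* \tilde H_{d-1}(K; F) <> 0 : some (d-1)-cycle is not a boundary.
   The augmented complex includes the empty face (size 0, degree -1). *)
Definition rhom_nz (K : {set {set V}}) (d : nat) : Prop :=
  exists z, [/\ chain_on K d z, (forall tau, bd z tau = 0) &
    ~ exists b, chain_on K d.+1 b /\ (forall tau, bd b tau = z tau)].
End Homology.

Definition independent (G : sgraph) (s : {set vtx G}) : bool :=
  [forall u in s, forall v in s, ~~ adj u v].

(* Ind(G[S]) as a complex on the vertex set of G *)
Definition ind_cx (G : sgraph) (S : {set vtx G}) : {set {set vtx G}} :=
  [set s : {set vtx G} | (s \subset S) && independent s].

Definition pbool (P : Prop) : bool :=
  if excluded_middle_informative P then true else false.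

(* reg(G) = max { j >= 0 : \tilde H_{j-1}(Ind(G[S]); F) <> 0 for some S }.
   Only j <= #|V| can occur (faces have at most #|V| vertices), so the
   inner max over j < #|V|.+1 is exhaustive; j = 0 occurs for S = set0. *)
Definition reg (F : fieldType) (G : sgraph) : nat :=
  \max_(S : {set vtx G})
    \max_(j < #|vtx G|.+1 | pbool (rhom_nz F (ind_cx S) j)) j.

(* Main.v *)
Require Import Defs.
From HB Require Import structures.
From mathcomp Require Import all_boot all_order all_algebra.
From mathcomp Require Import ring.
From Stdlib Require Import Classical ClassicalEpsilon.
Set Implicit Arguments. Unset Strict Implicit. Unset Printing Implicit Defensive.
Import GRing.Theory.
Local Open Scope ring_scope.

Lemma rkE (T : finType) (x : T) : nat_of_ord (enum_rank x) = index x (enum T).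
Proof. rewrite /enum_rank enum_rank_in.unlock insubdK //. by rewrite unfold_in /= cardE index_mem mem_enum. Qed.

Section Chains.
Variables (F : fieldType) (V : finType).
Implicit Types (c z a b : {set V} -> F) (s t r : {set V}) (u v w : V).
Local Notation bs := (bsign F).
Local Notation rk u := (nat_of_ord (enum_rank u)).

Lemma bsign_sq u s : bs u s * bs u s = 1.
Proof. by rewrite /bsign -exprD addnn -mul2n mulnC exprM sqrr_sign. Qed.

Lemma bsign_neq0 u s : bs u s != 0.
Proof. by rewrite /bsign signr_eq0. Qed.

Lemma bsignUl u s : bs u (u |: s) = bs u s.
Proof.
rewrite /bsign; congr (_ ^+ _); apply: eq_card => w; rewrite !inE.
by case: eqP => [->|]; rewrite ?ltnn ?andbF.
Qed.

Lemma bsignU1 u v s : v \notin s -> bs u (v |: s) = (-1) ^+ (rk v < rk u)%N * bs u s.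
Proof.
move=> vs; rewrite /bsign -exprD; congr (_ ^+ _).
case h: (rk v < rk u)%N.
  have -> : [set w in v |: s | (enum_rank w < enum_rank u)%N] =
            v |: [set w in s | (enum_rank w < enum_rank u)%N].
    apply/setP => w; rewrite !inE; case: eqP => [->|] //=; by rewrite h.
  by rewrite cardsU1 inE (negbTE vs).
rewrite add0n; apply: eq_card => w; rewrite !inE; case: eqP => [->|] //=; by rewrite h ?andbF.
Qed.

Lemma sign_swap u v : u != v -> (-1) ^+ (rk v < rk u)%N = - (-1) ^+ (rk u < rk v)%N :> F.
Proof.
move=> uv; have : rk u != rk v.
  by apply: contra uv => /eqP /ord_inj /enum_rank_inj ->.
case: ltngtP => //= _ _; by rewrite ?expr1 ?expr0 ?opprK.
Qed.

Lemma bd_ext c1 c2 s : (forall t, c1 t = c2 t) -> bd c1 s = bd c2 s.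
Proof. by move=> h; apply: eq_bigr => v _; rewrite h. Qed.

Lemma bdD c1 c2 s : bd (fun t => c1 t + c2 t) s = bd c1 s + bd c2 s.
Proof. by rewrite /bd -big_split; apply: eq_bigr => v _; rewrite mulrDr. Qed.

Lemma bdN c s : bd (fun t => - c t) s = - bd c s.
Proof. by rewrite /bd -sumrN; apply: eq_bigr => v _; rewrite mulrN. Qed.

Lemma bdB c1 c2 s : bd (fun t => c1 t - c2 t) s = bd c1 s - bd c2 s.
Proof. by rewrite bdD bdN. Qed.

Lemma bd0 s : bd (fun _ => 0 : F) s = 0.
Proof. by rewrite /bd big1 // => v _; rewrite mulr0. Qed.

Lemma sum_antisym (g : V -> V -> F) :
  (forall i j, g i j = - g j i) -> (forall i, g i i = 0) ->
  \sum_i \sum_j g i j = 0.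
Proof.
move=> anti diag.
have E : forall i j, g i j = (if (rk i < rk j)%N then g i j else 0) +
                             (if (rk j < rk i)%N then g i j else 0).
  move=> i j; case: ltngtP => [_|_|/ord_inj/enum_rank_inj ->]; rewrite ?addr0 ?add0r //.
rewrite (eq_bigr (fun i => \sum_j (if (rk i < rk j)%N then g i j else 0) +
                          \sum_j (if (rk j < rk i)%N then g i j else 0))); last first.
  by move=> i _; rewrite -big_split; apply: eq_bigr => j _; exact: E.
rewrite big_split /= [X in _ + X]exchange_big /= -[X in _ + X]opprK; apply/eqP.
rewrite subr_eq0 -sumrN; apply/eqP; apply: eq_bigr => i _.
rewrite -sumrN; apply: eq_bigr => j _; case: ifP => _; by rewrite ?oppr0 // anti opprK.
Qed.

Lemma bdbd c s : bd (bd c) s = 0.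
Proof.
rewrite /bd.
pose g u w := if [&& u \notin s, w \notin s & w != u] then
    bs u s * bs w (u |: s) * c (w |: (u |: s)) else 0.
transitivity (\sum_u \sum_w g u w); last first.
  apply: sum_antisym => [u w|u]; last by rewrite /g eqxx !andbF.
  rewrite /g; case: (boolP (u \in s)) => us; case: (boolP (w \in s)) => ws /=;
    rewrite ?oppr0 //.
  case: (eqVneq w u) => [->|wu]; first by rewrite oppr0.
  rewrite /= setUCA !bsignU1 // (sign_swap wu); ring.
rewrite big_mkcond; apply: eq_bigr => u _; case: ifP => us; last first.
  by rewrite big1 // => w _; rewrite /g us.
rewrite big_distrr big_mkcond /=; apply: eq_bigr => w _.
rewrite /g us /= !inE negb_or; case: (eqVneq w u) => [->|wu] /=; rewrite ?andbF //.
rewrite andbT; case: ifP => // _.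
by rewrite !bsignUl mulrA.
Qed.

Definition lkp v z : {set V} -> F :=
  fun s => if v \in s then 0 else bs v s * z (v |: s).
Definition cone v a : {set V} -> F :=
  fun s => if v \in s then bs v s * a (s :\ v) else 0.

Lemma bd_link v z r : v \notin r -> bd z (v |: r) = - bs v r * bd (lkp v z) r.
Proof.
move=> vr; rewrite /bd big_distrr /= big_mkcond [RHS]big_mkcond /=.
apply: eq_bigr => u _; rewrite !inE negb_or.
case: (boolP (u \in r)) => ur; rewrite ?andbF ?mulr0 //=.
case: (eqVneq u v) => [->|uv] /=; first by rewrite /lkp setU11 !mulr0.
rewrite /lkp !inE eq_sym (negbTE uv) (negbTE vr) /= bsignUl bsignU1 //.
rewrite bsignUl setUCA bsignU1 // (sign_swap uv).
have := bsign_sq v r; move=> hsq.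
have E : v |: (u |: r) = u |: (v |: r) by rewrite setUCA.
rewrite !E.
transitivity (- (-1) ^+ (rk u < rk v)%N * bs u r * z (u |: (v |: r)) * (bs v r * bs v r)).
  by rewrite hsq mulr1.
ring.
Qed.

Lemma lkp_cone v a s : (forall t, v \in t -> a t = 0) -> lkp v (cone v a) s = a s.
Proof.
move=> ha; rewrite /lkp /cone; case: ifP => vs; first by rewrite ha.
by rewrite setU11 setU1K ?vs // bsignUl mulrA bsign_sq mul1r.
Qed.

Lemma bd_cone_nov v a s : v \notin s -> bd (cone v a) s = a s.
Proof.
move=> vs; rewrite /bd (bigD1 v) //= big1 ?addr0.
  by rewrite /cone setU11 setU1K // bsignUl mulrA bsign_sq mul1r.
move=> u /andP [us uv]; rewrite /cone !inE eq_sym (negbTE uv) (negbTE vs).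
by rewrite mulr0.
Qed.

Lemma bd_cone_v v a r : v \notin r -> (forall t, v \in t -> a t = 0) ->
  bd (cone v a) (v |: r) = - bs v r * bd a r.
Proof. by move=> vr ha; rewrite bd_link //; congr (_ * _); apply: bd_ext => t; rewrite lkp_cone. Qed.

Lemma bd_cone v a s : (forall t, v \in t -> a t = 0) -> (forall t, bd a t = 0) ->
  bd (cone v a) s = a s.
Proof.
move=> ha hc; case: (boolP (v \in s)) => vs; last exact: bd_cone_nov.
by rewrite -(setD1K vs) bd_cone_v ?setD1K ?hc ?mulr0 ?ha // !inE eqxx.
Qed.

Lemma bd_lkp_v v z s : v \in s -> bd (lkp v z) s = 0.
Proof.
move=> vs; rewrite /bd big1 // => u _; rewrite /lkp !inE vs orbT mulr0 //.
Qed.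

Definition dclosed (K : {set {set V}}) := forall s t, t \subset s -> s \in K -> t \in K.

Lemma chain_on_bd K d c : dclosed K -> chain_on K d.+1 c -> chain_on K d (bd c).
Proof.
move=> dK hc s; rewrite /bd => hs.
have [u /andP [us hu]] : exists u, (u \notin s) && (c (u |: s) != 0).
  apply/existsP; apply: contraR hs; rewrite negb_exists => /forallP h.
  apply/eqP; apply: big1 => u us; have := h u; rewrite us /= negbK => /eqP ->.
  by rewrite mulr0.
have [h1 h2] := hc _ hu; split; first by apply: dK h1; apply: subsetUr.
by move: h2; rewrite cardsU1 us add1n => -[].
Qed.

Lemma chain_onD K d c1 c2 : chain_on K d c1 -> chain_on K d c2 ->
  chain_on K d (fun s => c1 s + c2 s).
Proof.
move=> h1 h2 s hs; case: (eqVneq (c1 s) 0) => [e|]; last exact: h1.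
by apply: h2; move: hs; rewrite e add0r.
Qed.

Lemma chain_onN K d c : chain_on K d c -> chain_on K d (fun s => - c s).
Proof. by move=> h s; rewrite oppr_eq0; apply: h. Qed.

Lemma chain_onB K d c1 c2 : chain_on K d c1 -> chain_on K d c2 ->
  chain_on K d (fun s => c1 s - c2 s).
Proof. by move=> h1 h2; apply: chain_onD => //; apply: chain_onN. Qed.

Lemma chain_on_sub (K K' : {set {set V}}) d c : {subset K <= K'} -> chain_on K d c -> chain_on K' d c.
Proof. by move=> sK h s /h [] /sK. Qed.


Lemma vertex_lemma (X Del Lk : {set {set V}}) v d :
  dclosed X ->
  {subset Del <= X} ->
  (forall s, v \notin s -> s \in X -> s \in Del) ->
  (forall s, s \in Lk -> (v \notin s) /\ (v |: s \in X)) ->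
  (forall s, v \notin s -> v |: s \in X -> s \in Lk) ->
  rhom_nz F X d.+1 -> rhom_nz F Del d.+1 \/ rhom_nz F Lk d.
Proof.
move=> dX hD1 hD2 hL1 hL2 [z [zon zcyc znb]].
case: (classic (rhom_nz F Del d.+1)) => nD; [by left|right].
apply: NNPP => nL; apply: znb.
pose c := lkp v z.
have con : chain_on Lk d c.
  move=> s; rewrite /c /lkp; case: ifP => [_|vs]; first by rewrite eqxx. rewrite mulf_eq0 negb_or => /andP [_ hz].
  have [h1 h2] := zon _ hz; split; first by apply: hL2; rewrite ?vs.
  by move: h2; rewrite cardsU1 vs add1n => -[].
have ccyc : forall t, bd c t = 0.
  move=> t; case: (boolP (v \in t)) => vt; first exact: bd_lkp_v.
  have := zcyc (v |: t); rewrite bd_link // => /eqP.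
  by rewrite mulf_eq0 oppr_eq0 (negbTE (bsign_neq0 _ _)) /= => /eqP.
have [a [aon abd]] : exists a, chain_on Lk d.+1 a /\ (forall t, bd a t = c t).
  apply: NNPP => h; apply: nL; exists c; split => // -[b hb]; apply: h; by exists b.
have av : forall t, v \in t -> a t = 0.
  move=> t vt; apply/eqP; apply: contraT => /aon [/hL1 [] ]; by rewrite vt.
pose z' := fun s => z s + bd (cone v a) s.
have conon : chain_on X d.+2 (cone v a).
  move=> s; rewrite /cone; case: ifP => [vs|_]; last by rewrite eqxx. rewrite mulf_eq0 negb_or => /andP [_ h].
  have [/hL1 [h1 h2] h3] := aon _ h; rewrite setD1K // in h2; split => //.
  by rewrite -(setD1K vs) cardsU1 !inE eqxx /= h3.
have z'v : forall r, v \notin r -> z' (v |: r) = 0.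
  move=> r vr; rewrite /z' bd_cone_v // abd /c /lkp (negbTE vr).
  by rewrite mulNr mulrA bsign_sq mul1r addrN.
have z'on : chain_on Del d.+1 z'.
  move=> s hs; case: (boolP (v \in s)) => vs.
    have := z'v (s :\ v); rewrite setD11 setD1K // => /(_ isT) e.
    by rewrite e eqxx in hs.
  have [h1 h2] : s \in X /\ #|s| = d.+1.
    case: (eqVneq (z s) 0) => [e|nz]; last exact: zon.
    move: hs; rewrite /z' e add0r; exact: (chain_on_bd dX conon).
  by split => //; apply: hD2.
have z'cyc : forall t, bd z' t = 0.
  by move=> t; rewrite /z' bdD zcyc bdbd addr0.
have [b [bon bbd]] : exists b, chain_on Del d.+2 b /\ (forall t, bd b t = z' t).
  apply: NNPP => h; apply: nD; exists z'; split => // -[b hb]; apply: h; by exists b.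
exists (fun s => b s - cone v a s); split.
  by apply: chain_onB => //; exact: chain_on_sub hD1 bon.
by move=> t; rewrite bdB bbd /z' addrK.
Qed.

Lemma susp_lemma (Y Z : {set {set V}}) x y k : x != y ->
  (forall s, s \in Y -> (x \notin s) && (y \notin s)) ->
  (forall s, s \in Y -> (x |: s \in Z) && (y |: s \in Z)) ->
  (forall s, x \notin s -> x |: s \in Z -> s \in Y) ->
  rhom_nz F Y k -> rhom_nz F Z k.+1.
Proof.
move=> xy h1 h2 h3 [c [con ccyc cnb]].
have cx : forall t, x \in t -> c t = 0.
  move=> t xt; apply/eqP; apply: contraT => /con [/h1]; by rewrite xt.
have cy : forall t, y \in t -> c t = 0.
  move=> t yt; apply/eqP; apply: contraT => /con [/h1]; by rewrite yt andbF.
have bx : forall t, bd (cone x c) t = c t by move=> t; apply: bd_cone.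
have by_ : forall t, bd (cone y c) t = c t by move=> t; apply: bd_cone.
exists (fun s => cone x c s - cone y c s); split.
- apply: chain_onB.
    move=> s; rewrite /cone; case: ifP => [xs|_]; last by rewrite eqxx. rewrite mulf_eq0 negb_or => /andP [_ h].
    have [hY hk] := con _ h; have /andP [hz _] := h2 _ hY; rewrite setD1K // in hz.
    split => //; by rewrite -(setD1K xs) cardsU1 !inE eqxx /= hk.
  move=> s; rewrite /cone; case: ifP => [xs|_]; last by rewrite eqxx. rewrite mulf_eq0 negb_or => /andP [_ h].
  have [hY hk] := con _ h; have /andP [_ hz] := h2 _ hY; rewrite setD1K // in hz.
  split => //; by rewrite -(setD1K xs) cardsU1 !inE eqxx /= hk.
- by move=> t; rewrite bdB bx by_ subrr.
- move=> [b [bon bbd]]; apply: cnb.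
  exists (fun s => - lkp x b s); split.
    move=> s; rewrite oppr_eq0 /lkp; case: ifP => [_|xs]; first by rewrite eqxx. rewrite mulf_eq0 negb_or => /andP [_ h].
    have [hz hk] := bon _ h; split; first by apply: h3; rewrite ?xs.
    by move: hk; rewrite cardsU1 xs add1n => -[].
  move=> t; rewrite bdN; case: (boolP (x \in t)) => xt.
    by rewrite bd_lkp_v // cx // oppr0.
  have := bbd (x |: t); rewrite bd_link // /cone setU11 setU1K // bsignUl.
  have -> : (if y \in x |: t then bs y (x |: t) * c ((x |: t) :\ y) else 0) = 0.
    by case: ifP => // _; rewrite cx ?mulr0 // !inE xy eqxx.
  move=> e; have := congr1 (fun q : F => bs x t * q) e.
  by rewrite subr0 mulrA bsign_sq mul1r mulrA mulrN bsign_sq mulN1r.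
Qed.

End Chains.

Section Transport.
Variables (F : fieldType) (R V : finType) (f : R -> V).
Hypothesis finj : injective f.
Hypothesis frk : forall u w,
  (enum_rank (f u) < enum_rank (f w))%N = (enum_rank u < enum_rank w)%N.
Local Notation bs := (bsign F).
Implicit Types (s : {set R}) (t : {set V}).

Definition rng := f @: [set: R].
Definition pull (c : {set V} -> F) : {set R} -> F := fun s => c (f @: s).
Definition push (c : {set R} -> F) : {set V} -> F :=
  fun t => if t \subset rng then c (f @^-1: t) else 0.

Lemma bsign_f u s : bs (f u) (f @: s) = bs u s.
Proof.
rewrite /bsign; congr (_ ^+ _).
have -> : [set w in f @: s | (enum_rank w < enum_rank (f u))%N] =
          f @: [set w in s | (enum_rank w < enum_rank u)%N].
  apply/setP => w; rewrite inE; apply/andP/imsetP.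
    move=> [/imsetP [w0 w0s ->]]; rewrite frk => h; exists w0 => //; by rewrite inE w0s.
  move=> [w0]; rewrite inE => /andP [w0s h] ->; by rewrite mem_imset // frk.
by rewrite card_imset.
Qed.

Lemma preimK s : f @^-1: (f @: s) = s.
Proof. by apply/setP => u; rewrite inE mem_imset. Qed.

Lemma imK t : t \subset rng -> f @: (f @^-1: t) = t.
Proof.
move=> /subsetP h; apply/setP => v; apply/imsetP/idP.
  by move=> [u]; rewrite inE => ? ->.
move=> vt; have /imsetP [u _ e] := h _ vt; exists u => //; by rewrite inE -e.
Qed.

Lemma sum_rng (g : V -> F) : (forall v, v \notin rng -> g v = 0) ->
  \sum_v g v = \sum_u g (f u).
Proof.
move=> h; rewrite (bigID (mem rng)) /= [X in _ + X]big1 ?addr0; last by move=> v /h.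
rewrite big_imset /=; last by move=> ? ? _ _; apply: finj.
by apply: eq_bigl => u; rewrite inE.
Qed.

Definition in_rng (c : {set V} -> F) := forall t, c t != 0 -> t \subset rng.

Lemma bd_pull c s : in_rng c -> bd (pull c) s = pull (bd c) s.
Proof.
move=> hc; rewrite /pull /bd [RHS]big_mkcond [LHS]big_mkcond /= sum_rng; last first.
  move=> v vr; case: ifP => // _; have -> : c (v |: f @: s) = 0; last by rewrite mulr0.
  apply/eqP; apply: contraT => /hc /subsetP h; case/negP: vr; apply: h.
  by rewrite !inE eqxx.
apply: eq_bigr => u _; rewrite mem_imset // -imsetU1 bsign_f.
by case: ifP.
Qed.

Lemma push_rng c : in_rng (push c).
Proof. by move=> t; rewrite /push; case: ifP => // _; rewrite eqxx. Qed.

Lemma pull_push c s : pull (push c) s = c s.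
Proof. by rewrite /pull /push imsetS ?subsetT // preimK. Qed.

Lemma push_pull c t : in_rng c -> push (pull c) t = c t.
Proof.
move=> hc; rewrite /push /pull; case: ifP => h; first by rewrite imK.
apply/esym/eqP; apply: contraT => /hc; by rewrite h.
Qed.

Lemma bd_push c t : bd (push c) t = push (bd c) t.
Proof.
case h: (t \subset rng).
  rewrite -(imK h); set s := f @^-1: t.
  have -> : bd (push c) (f @: s) = pull (bd (push c)) s by [].
  rewrite -bd_pull; last exact: push_rng.
  rewrite /push imsetS ?subsetT // preimK; apply: bd_ext => r; exact: pull_push.
rewrite /push h /bd big1 // => u _; case: ifP; last by rewrite mulr0.
by move=> /(subset_trans (subsetUr _ _)); rewrite h.
Qed.

Lemma transport (K : {set {set R}}) (K' : {set {set V}}) d :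
  (forall s, (f @: s \in K') = (s \in K)) ->
  (forall t, t \in K' -> t \subset rng) ->
  rhom_nz F K d <-> rhom_nz F K' d.
Proof.
move=> hK1 hK2; split.
- move=> [z [zon zcyc znb]]; exists (push z); split.
  + move=> t; rewrite /push; case: ifP => [h|_]; last by rewrite eqxx.
    move=> /zon [hK hc]; rewrite -(imK h) hK1 hK; split => //.
    by rewrite card_imset.
  + by move=> t; rewrite bd_push /push; case: ifP; rewrite ?zcyc.
  + move=> [b [bon bbd]]; apply: znb; exists (pull b); split.
      by move=> s /bon [hK hc]; rewrite -hK1; split => //; rewrite -hc card_imset.
    move=> s; rewrite bd_pull; last by move=> t /bon [/hK2].
    by rewrite /pull bbd -/(pull (push z) s) pull_push.
- have hr : forall c, chain_on K' d c -> in_rng c by move=> c hc t /hc [/hK2].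
  move=> [z [zon zcyc znb]]; exists (pull z); split.
  + by move=> s /zon [hK hc]; rewrite -hK1; split => //; rewrite -hc card_imset.
  + by move=> s; rewrite bd_pull; [rewrite /pull zcyc | exact: hr _ zon].
  + move=> [b [bon bbd]]; apply: znb; exists (push b); split.
      move=> t; rewrite /push; case: ifP => [h|_]; last by rewrite eqxx.
      move=> /bon [hK hc]; rewrite -(imK h) hK1 hK; split => //.
      by rewrite card_imset.
    move=> t; rewrite bd_push /push; case: ifP => h.
      by rewrite bbd /pull imK.
    apply/esym/eqP; apply: contraT => /(hr _ zon); by rewrite h.
Qed.
End Transport.

Lemma index_filter_lt (T : eqType) (P : pred T) (s : seq T) (a b : T) :
  a \in s -> b \in s -> P a -> P b ->
  (index a (filter P s) < index b (filter P s))%N = (index a s < index b s)%N.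
Proof.
elim: s => //= h s IH; rewrite !inE => ha hb Pa Pb.
case: (eqVneq h a) => [ea|na]; case: (eqVneq h b) => [eb|nb] /=.
- by subst; rewrite Pb /= eqxx.
- by subst; rewrite Pa /= eqxx (negbTE nb).
- by subst; rewrite Pb /= eqxx (negbTE na).
- move: ha hb; rewrite eq_sym (negbTE na) eq_sym (negbTE nb) /= => ha hb.
  case: (P h) => /=; rewrite ?(negbTE na) ?(negbTE nb) ?ltnS; exact: IH.
Qed.

Lemma enum_option (T : finType) : enum {: option T} = None :: map Some (enum T).
Proof. rewrite !enumT {1}Finite.enum.unlock. reflexivity. Qed.

Lemma enum_sig (T : finType) (P : pred T) : map val (enum {: {x | P x}}) = filter P (enum T).
Proof.
rewrite [in LHS]enumT [in LHS]Finite.enum.unlock /=.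
rewrite /Builders_26.sub_enum (@pmap_filter _ _ insub val); last exact: insubK.
rewrite enumT /enum_mem. apply: eq_filter=> x. by rewrite isSome_insub.
Qed.

Section Graph.
Variable F : fieldType.

Lemma indepP (G : sgraph) (s : {set vtx G}) :
  reflect (forall u w, u \in s -> w \in s -> ~~ adj u w) (independent s).
Proof.
apply: (iffP forallP) => [h u w us ws | h u].
  by have := h u; rewrite us /= => /forallP /(_ w); rewrite ws.
by apply/implyP => us; apply/forallP => w; apply/implyP => ws; apply: h.
Qed.

Lemma ind_cxE (G : sgraph) (S s : {set vtx G}) :
  (s \in ind_cx S) = (s \subset S) && independent s.
Proof. by rewrite inE. Qed.

Lemma dclosed_ind (G : sgraph) (S : {set vtx G}) : dclosed (ind_cx S).
Proof.
move=> s t ts; rewrite !ind_cxE => /andP [sS /indepP hs].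
rewrite (subset_trans ts sS) /=; apply/indepP => u w ut wt.
by apply: hs; apply: (subsetP ts).
Qed.

Lemma vertex_ind (G : sgraph) (S : {set vtx G}) v d : v \in S ->
  rhom_nz F (ind_cx S) d.+1 ->
  rhom_nz F (ind_cx (S :\ v)) d.+1 \/
  rhom_nz F (ind_cx (S :\: (v |: [set u | adj v u]))) d.
Proof.
move=> vS; apply: (vertex_lemma (v:=v)).
- exact: dclosed_ind.
- move=> s; rewrite !ind_cxE => /andP [h ->]; by rewrite (subset_trans h (subsetDl _ _)).
- move=> s vs; rewrite !ind_cxE => /andP [h ->]; rewrite andbT.
  apply/subsetP => u us; rewrite !inE (subsetP h _ us) andbT.
  by apply/eqP => e; rewrite -e us in vs.
- move=> s; rewrite !ind_cxE => /andP [h /indepP hi]; split.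
    by apply/negP => /(subsetP h); rewrite !inE eqxx.
  apply/andP; split.
    apply/subsetP => u; rewrite !inE => /orP [/eqP -> //|/(subsetP h)].
    by rewrite !inE => /andP [].
  apply/indepP => u w; rewrite !inE => /orP [/eqP ->|us] /orP [/eqP ->|ws].
  + by rewrite adj_irr.
  + have := subsetP h _ ws; rewrite !inE negb_or => /andP [/andP [_ hw] _] //.
  + have := subsetP h _ us; rewrite !inE negb_or => /andP [/andP [_ hu] _].
    by rewrite adj_sym.
  + exact: hi.
- move=> s vs; rewrite !ind_cxE => /andP [h /indepP hi].
  apply/andP; split; last by apply/indepP => u w us ws; apply: hi; rewrite !inE ?us ?ws orbT.
  apply/subsetP => u us; rewrite !inE negb_or.
  have -> : u \in S by apply: (subsetP h); rewrite !inE us orbT.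
  rewrite andbT; apply/andP; split; first by apply/eqP => e; rewrite -e us in vs.
  by apply: hi; rewrite !inE ?us ?eqxx ?orbT.
Qed.

Lemma susp_ind (G : sgraph) (x y : vtx G) (U : {set vtx G}) k : adj x y ->
  x \notin U -> y \notin U ->
  (forall u, u \in U -> ~~ adj x u && ~~ adj y u) ->
  rhom_nz F (ind_cx U) k -> rhom_nz F (ind_cx (x |: (y |: U))) k.+1.
Proof.
move=> axy xU yU hU; have xy : x != y.
  by apply: contraTneq axy => ->; rewrite adj_irr.
apply: (susp_lemma (x:=x) (y:=y)) => //.
- move=> s; rewrite ind_cxE => /andP [/subsetP h _].
  by apply/andP; split; apply/negP => /h; apply/negP.
- move=> s; rewrite !ind_cxE => /andP [/subsetP h /indepP hi].
  have sub : forall z, z \in s -> z \in x |: (y |: U) by move=> z /h zU; rewrite !inE zU !orbT.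
  apply/andP; split; apply/andP; split.
  + apply/subsetP => u; rewrite !inE => /orP [/eqP ->|/sub]; by rewrite ?inE ?eqxx.
  + apply/indepP => u w; rewrite !inE => /orP [/eqP ->|us] /orP [/eqP ->|ws].
    * by rewrite adj_irr.
    * by have /andP [] := hU _ (h _ ws).
    * by rewrite adj_sym; have /andP [] := hU _ (h _ us).
    * exact: hi.
  + apply/subsetP => u; rewrite !inE => /orP [/eqP ->|/sub]; by rewrite ?inE ?eqxx ?orbT.
  + apply/indepP => u w; rewrite !inE => /orP [/eqP ->|us] /orP [/eqP ->|ws].
    * by rewrite adj_irr.
    * by have /andP [] := hU _ (h _ ws).
    * by rewrite adj_sym; have /andP [] := hU _ (h _ us).
    * exact: hi.
- move=> s xs; rewrite !ind_cxE => /andP [/subsetP h /indepP hi].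
  apply/andP; split; last by apply/indepP => u w us ws; apply: hi; rewrite !inE ?us ?ws orbT.
  apply/subsetP => u us; have := h u; rewrite !inE us orbT => /(_ isT).
  case/orP => [/eqP eu|]; first by rewrite -eu us in xs.
  case/orP => // /eqP eu; subst u.
  by have := hi x y; rewrite !inE eqxx us orbT axy => /(_ isT isT).
Qed.
End Graph.

Section Reg.
Variable F : fieldType.

Lemma rhom_nz_le (V : finType) (K : {set {set V}}) j : rhom_nz F K j -> (j <= #|V|)%N.
Proof.
move=> [z [zon _ znb]]; rewrite leqNgt; apply/negP => hj; apply: znb.
exists (fun _ => 0); split; first by move=> s; rewrite eqxx.
move=> t; rewrite bd0; apply/esym/eqP; apply: contraT => /zon [_ hc].
by move: (max_card (mem t)); rewrite hc leqNgt hj.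
Qed.

Lemma reg_lb (G : sgraph) (S : {set vtx G}) j : rhom_nz F (ind_cx S) j -> (j <= reg F G)%N.
Proof.
move=> h; have hj : (j < #|vtx G|.+1)%N by rewrite ltnS (rhom_nz_le h).
rewrite /reg; apply: leq_trans (leq_bigmax S).
have := @leq_bigmax_cond _ (fun j : 'I_#|vtx G|.+1 => pbool (rhom_nz F (ind_cx S) j))
  (fun j => nat_of_ord j) (Ordinal hj).
apply; rewrite /pbool; by case: excluded_middle_informative.
Qed.

Lemma reg_ub (G : sgraph) m :
  (forall (S : {set vtx G}) j, rhom_nz F (ind_cx S) j -> (j <= m)%N) -> (reg F G <= m)%N.
Proof.
move=> h; apply/bigmax_leqP => S _; apply/bigmax_leqP => j.
rewrite /pbool; case: excluded_middle_informative => // hj _; exact: h hj.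
Qed.
End Reg.

Lemma indep_imset (R : finType) (G' : sgraph) (f : R -> vtx G') (s : {set R}) :
  independent (f @: s) = [forall a in s, forall b in s, ~~ adj (f a) (f b)].
Proof.
apply/indepP/forallP => [h a|h u w /imsetP [a ha ->] /imsetP [b hb ->]].
  apply/implyP => ha; apply/forallP => b; apply/implyP => hb; apply: h; exact: imset_f.
by have := h a; rewrite ha /= => /forallP /(_ b); rewrite hb.
Qed.

Lemma imset_subset_inj (T1 T2 : finType) (f : T1 -> T2) (A B : {set T1}) :
  injective f -> (f @: A \subset f @: B) = (A \subset B).
Proof.
move=> fi; apply/idP/idP; last exact: imsetS.
move=> /subsetP h; apply/subsetP => a ha; by rewrite -(mem_imset _ _ fi) h // imset_f.
Qed.

Section Contr.
Variables (F : fieldType) (G : sgraph) (x y : vtx G).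
Local Notation R := (cvtx_rest x y).
Local Notation H := (contract x y).

Lemma rk_val (u w : R) :
  (enum_rank (val u) < enum_rank (val w))%N = (enum_rank u < enum_rank w)%N.
Proof.
rewrite !rkE -[index u _](index_map val_inj) -[index w _](index_map val_inj) enum_sig.
by symmetry; apply: index_filter_lt; rewrite ?mem_enum ?(valP u) ?(valP w).
Qed.

Lemma rk_some (u w : R) :
  (enum_rank (Some u : vtx H) < enum_rank (Some w : vtx H))%N = (enum_rank u < enum_rank w)%N.
Proof.
rewrite !rkE; have -> : enum (vtx H) = None :: map Some (enum {: R}) := enum_option _.
by rewrite /= !index_map //; move=> ? ? [].
Qed.

Lemma bridge (Q : {set R}) d :
  rhom_nz F (ind_cx (G:=G) (val @: Q)) d <-> rhom_nz F (ind_cx (G:=H) (Some @: Q)) d.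
Proof.
pose K := [set s : {set R} | val @: s \in ind_cx (G:=G) (val @: Q)].
have e1 : rhom_nz F K d <-> rhom_nz F (ind_cx (G:=G) (val @: Q)) d.
  apply: (@transport F R (vtx G) val val_inj rk_val K) => [s|t]; first by rewrite /K [RHS]inE.
  rewrite ind_cxE => /andP [h _]; apply: subset_trans h (imsetS _ (subsetT _)).
have e2 : rhom_nz F K d <-> rhom_nz F (ind_cx (G:=H) (Some @: Q)) d.
  have si : injective (fun r : R => (Some r : vtx H)) by move=> ? ? [].
  apply: (@transport F R (vtx H) _ si rk_some K) => [s|t].
    rewrite /K [RHS]inE !ind_cxE !imset_subset_inj //; last exact: val_inj.
    by congr (_ && _); rewrite (indep_imset (G':=H)) (indep_imset (G':=G)).
  rewrite ind_cxE => /andP [h _]; apply: subset_trans h (imsetS _ (subsetT _)).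
by split => h; [apply/e2/e1 | apply/e1/e2].
Qed.

Lemma bridge_G (T : {set vtx G}) k : x \notin T -> y \notin T ->
  rhom_nz F (ind_cx T) k -> (k <= reg F H)%N.
Proof.
move=> xT yT h; pose Q := [set r : R | val r \in T].
have eT : val @: Q = T.
  apply/setP => v; apply/imsetP/idP => [[r]|vT]; first by rewrite inE => ? ->.
  have P : (v != x) && (v != y).
    apply/andP; split; apply/eqP => e; [rewrite e in vT; by rewrite vT in xT
                                       | rewrite e in vT; by rewrite vT in yT].
  by exists (exist _ v P); rewrite ?inE.
rewrite -eT in h; move/(bridge Q k): h; exact: reg_lb.
Qed.

Lemma bridge_H (S' : {set vtx H}) k : None \notin S' ->
  rhom_nz F (ind_cx S') k -> (k <= reg F G)%N.
Proof.
move=> nS h; pose Q := [set r : R | (Some r : vtx H) \in S'].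
have eS : (fun r : R => (Some r : vtx H)) @: Q = S'.
  apply/setP => o; apply/imsetP/idP => [[r]|oS]; first by rewrite inE => ? ->.
  move: oS nS; case: o => [r|] oS nS; last by rewrite oS in nS.
  by exists r; [rewrite inE; exact: oS |].
rewrite -eS in h; move/(bridge Q k): h; exact: reg_lb.
Qed.

Hypothesis axy : adj x y.

Lemma claim1 : (reg F G <= (reg F H).+1)%N.
Proof.
apply: reg_ub => S d; set r := reg F H.
have Hy : forall (S0 : {set vtx G}) d0, x \notin S0 -> rhom_nz F (ind_cx S0) d0 -> (d0 <= r.+1)%N.
  move=> S0 [|d0] // xS h.
  case: (boolP (y \in S0)) => yS; last by apply: leqW; apply: bridge_G xS yS h.
  case: (vertex_ind yS h) => h'.
    by apply: leqW; apply: (bridge_G _ _ h'); rewrite !inE ?eqxx ?(negbTE xS) ?andbF.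
  rewrite ltnS; apply: (bridge_G _ _ h'); rewrite !inE ?eqxx //.
  by rewrite adj_sym axy orbT.
move: d; case: (boolP (x \in S)) => xS; last by move=> d; exact: Hy xS.
case=> [|d] // h.
case: (vertex_ind xS h) => h'.
  by apply: Hy h'; rewrite setD11.
rewrite ltnS; apply: (bridge_G _ _ h'); rewrite !inE ?eqxx // ?axy ?orbT //.
Qed.

Lemma claim2 : (reg F H <= reg F G)%N.
Proof.
apply: reg_ub => S' [|d] // h.
case: (boolP (None \in S')) => nS; last exact: bridge_H nS h.
case: (vertex_ind nS h) => h'.
  by apply: bridge_H h'; rewrite setD11.
move: h'; set S'' := S' :\: _ => h'.
pose Q := [set r : R | (Some r : vtx H) \in S''].
have eS : (fun r : R => (Some r : vtx H)) @: Q = S''.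
  apply/setP => o; apply/imsetP/idP => [[r]|oS]; first by rewrite inE => ? ->.
  move: oS; case: o => [r|] oS; last by move: oS; rewrite !inE eqxx.
  by exists r; [rewrite inE; exact: oS |].
rewrite -eS in h'; move/(bridge Q d): h' => h'.
apply: reg_lb; apply: (susp_ind axy _ _ _ h').
- by apply/imsetP => -[r _ e]; have := valP r; rewrite -e eqxx.
- by apply/imsetP => -[r _ e]; have := valP r; rewrite -e eqxx andbF.
- move=> u /imsetP [r]; rewrite inE => hr ->.
  by move: hr; rewrite /S'' !inE /= negb_or => /andP [->].
Qed.
End Contr.

Local Close Scope ring_scope.

Theorem mainTheorem17 (F : fieldType) :
  (forall (G : sgraph) (x y : vtx G), adj x y ->
     reg F (contract x y) <= reg F G <= (reg F (contract x y)).+1) /\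
  (forall G H : sgraph, contracts_to G H -> reg F H <= reg F G).
Proof.
split.
  by move=> G x y axy; rewrite (claim2 F axy) (claim1 F axy).
move=> G H h; elim: h => // G0 H0 x y axy _ IH.
exact: leq_trans IH (claim2 F axy).
Qed.
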